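(* Under the hypotheses of Lemma 2.2, let $\varphi(U)=\phi(U)-\phi(I)U+[T,U]$ with $T=P_1\phi(P_1)P_2+P_2\phi(P_2)P_1$. Then for all $U_{ij},V_{ij}\in\mathcal{U}_{ij}$ ($i,j=1,2$): (1) $\varphi(U_{11}\circ V_{12})=\varphi(U_{11})\circ V_{12}+U_{11}\circ\varphi(V_{12})$; (2) $\varphi(U_{22}\circ V_{21})=\varphi(U_{22})\circ V_{21}+U_{22}\circ\varphi(V_{21})$; (3) $\varphi(U_{11}\circ V_{21})=\varphi(U_{11})\circ V_{21}+U_{11}\circ\varphi(V_{21})$; (4) $\varphi(U_{22}\circ V_{12})=\varphi(U_{22})\circ V_{12}+U_{22}\circ\varphi(V_{12})$; (5) $\varphi(U_{11}\circ V_{11})=\varphi(U_{11})\circ V_{11}+U_{11}\circ\varphi(V_{11})$; (6) $\varphi(U_{22}\circ V_{22})=\varphi(U_{22})\circ V_{22}+U_{22}\circ\varphi(V_{22})$; (7) $\varphi(U_{12}\circ V_{21})=\varphi(U_{12})\circ V_{21}+U_{12}\circ\varphi(V_{21})$; (8) $\varphi(U_{21}\circ V_{12})=\varphi(U_{21})\circ V_{12}+U_{21}\circ\varphi(V_{12})$.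
   Context: $\mathcal{U}=\begin{pmatrix}\mathcal{A}&\mathcal{M}\\ \mathcal{N}&\mathcal{B}\end{pmatrix}$ is a generalized matrix ring: $\mathcal{A},\mathcal{B}$ unital 2-torsion free rings, $\mathcal{M}$ a unital $(\mathcal{A},\mathcal{B})$-bimodule faithful on both sides (if $A\mathcal{M}=\{0\}$ then $A=0$; if $\mathcal{M}B=\{0\}$ then $B=0$), $\mathcal{N}$ a unital $(\mathcal{B},\mathcal{A})$-bimodule, with bimodule pairings $MN\in\mathcal{A}$, $NM\in\mathcal{B}$ satisfying $(MN)M'=M(NM')$, $(NM)N'=N(MN')$; $\mathcal{U}$ consists of $2\times2$ matrices with usual matrix operations and identity $I$. The hypotheses of Lemma 2.2: $\phi:\mathcal{U}\to\mathcal{U}$ is additive and $\phi(U)\circ V+U\circ\phi(V)=0$ whenever $UV=VU=0$. $X\circ Y=XY+YX$, $[X,Y]=XY-YX$. $P_1=\mathrm{diag}(I_{\mathcal{A}},0)$, $P_2=\mathrm{diag}(0,I_{\mathcal{B}})$, and $\mathcal{U}_{ij}=P_i\mathcal{U}P_j$. *)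

(* Defs.v *)
From HB Require Import structures.
From mathcomp Require Import all_boot all_order all_algebra.
Set Implicit Arguments. Unset Strict Implicit. Unset Printing Implicit Defensive.
Import GRing.Theory.
Local Open Scope ring_scope.

(* A generalized matrix ring datum: unital rings A, B, a unital
   (A,B)-bimodule M, a unital (B,A)-bimodule N, and bimodule pairings
   M x N -> A, N x M -> B satisfying the Morita-context axioms. *)
Record GMR := {
  gA : ringType; gB : ringType; gM : zmodType; gN : zmodType;
  lAM : gA -> gM -> gM;
  rMB : gM -> gB -> gM;
  lBN : gB -> gN -> gN;
  rNA : gN -> gA -> gN;
  pMN : gM -> gN -> gA;
  pNM : gN -> gM -> gB;
  lAM_addl : forall a a' m, lAM (a + a') m = lAM a m + lAM a' m;
  lAM_addr : forall a m m', lAM a (m + m') = lAM a m + lAM a m';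
  lAM_mul : forall a a' m, lAM (a * a') m = lAM a (lAM a' m);
  lAM_1 : forall m, lAM 1 m = m;
  rMB_addl : forall m m' b, rMB (m + m') b = rMB m b + rMB m' b;
  rMB_addr : forall m b b', rMB m (b + b') = rMB m b + rMB m b';
  rMB_mul : forall m b b', rMB m (b * b') = rMB (rMB m b) b';
  rMB_1 : forall m, rMB m 1 = m;
  M_bimod : forall a m b, rMB (lAM a m) b = lAM a (rMB m b);
  lBN_addl : forall b b' n, lBN (b + b') n = lBN b n + lBN b' n;
  lBN_addr : forall b n n', lBN b (n + n') = lBN b n + lBN b n';
  lBN_mul : forall b b' n, lBN (b * b') n = lBN b (lBN b' n);
  lBN_1 : forall n, lBN 1 n = n;
  rNA_addl : forall n n' a, rNA (n + n') a = rNA n a + rNA n' a;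
  rNA_addr : forall n a a', rNA n (a + a') = rNA n a + rNA n a';
  rNA_mul : forall n a a', rNA n (a * a') = rNA (rNA n a) a';
  rNA_1 : forall n, rNA n 1 = n;
  N_bimod : forall b n a, rNA (lBN b n) a = lBN b (rNA n a);
  pMN_addl : forall m m' n, pMN (m + m') n = pMN m n + pMN m' n;
  pMN_addr : forall m n n', pMN m (n + n') = pMN m n + pMN m n';
  pMN_lA : forall a m n, pMN (lAM a m) n = a * pMN m n;
  pMN_rA : forall m n a, pMN m (rNA n a) = pMN m n * a;
  pMN_bal : forall m b n, pMN (rMB m b) n = pMN m (lBN b n);
  pNM_addl : forall n n' m, pNM (n + n') m = pNM n m + pNM n' m;
  pNM_addr : forall n m m', pNM n (m + m') = pNM n m + pNM n m';
  pNM_lB : forall b n m, pNM (lBN b n) m = b * pNM n m;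
  pNM_rB : forall n m b, pNM n (rMB m b) = pNM n m * b;
  pNM_bal : forall n a m, pNM (rNA n a) m = pNM n (lAM a m);
  assoc_MNM : forall m n m', lAM (pMN m n) m' = rMB m (pNM n m');
  assoc_NMN : forall n m n', lBN (pNM n m) n' = rNA n (pMN m n')
}.

Section Mat.
Variable G : GMR.

(* elements of U = [[A, M], [N, B]] *)
Record mat := Mat { e11 : gA G; e12 : gM G; e21 : gN G; e22 : gB G }.

Definition mzero : mat := Mat 0 0 0 0.
Definition mone : mat := Mat 1 0 0 1.
Definition madd (X Y : mat) : mat :=
  Mat (e11 X + e11 Y) (e12 X + e12 Y) (e21 X + e21 Y) (e22 X + e22 Y).
Definition mopp (X : mat) : mat :=
  Mat (- e11 X) (- e12 X) (- e21 X) (- e22 X).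
Definition msub (X Y : mat) : mat := madd X (mopp Y).
Definition mmul (X Y : mat) : mat :=
  Mat (e11 X * e11 Y + pMN (e12 X) (e21 Y))
      (lAM (e11 X) (e12 Y) + rMB (e12 X) (e22 Y))
      (lBN (e22 X) (e21 Y) + rNA (e21 X) (e11 Y))
      (pNM (e21 X) (e12 Y) + e22 X * e22 Y).
Definition mcirc (X Y : mat) : mat := madd (mmul X Y) (mmul Y X).
Definition mlie (X Y : mat) : mat := msub (mmul X Y) (mmul Y X).

Definition P1 : mat := Mat 1 0 0 0.
Definition P2 : mat := Mat 0 0 0 1.

End Mat.

Definition two_torsion_free (R : ringType) : Prop :=
  forall x : R, x + x = 0 -> x = 0.

Definition M_faithful (G : GMR) : Prop :=
  (forall a : gA G, (forall m : gM G, lAM a m = 0) -> a = 0) /\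
  (forall b : gB G, (forall m : gM G, rMB m b = 0) -> b = 0).

Definition lemma22_hyp (G : GMR) (phi : mat G -> mat G) : Prop :=
  (forall X Y, phi (madd X Y) = madd (phi X) (phi Y)) /\
  (forall U V, mmul U V = mzero G -> mmul V U = mzero G ->
     madd (mcirc (phi U) V) (mcirc U (phi V)) = mzero G).

Definition Tphi (G : GMR) (phi : mat G -> mat G) : mat G :=
  madd (mmul (mmul (P1 G) (phi (P1 G))) (P2 G))
       (mmul (mmul (P2 G) (phi (P2 G))) (P1 G)).

Definition varphi (G : GMR) (phi : mat G -> mat G) (U : mat G) : mat G :=
  madd (msub (phi U) (mmul (phi (mone G)) U)) (mlie (Tphi phi) U).

Definition corner (G : GMR) (Pi Pj : mat G) (X : mat G) : mat G :=
  mmul (mmul Pi X) Pj.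

Definition jder_at (G : GMR) (phi : mat G -> mat G) (U V : mat G) : Prop :=
  varphi phi (mcirc U V) =
  madd (mcirc (varphi phi U) V) (mcirc U (varphi phi V)).

(* Main.v *)
Require Import Defs.
From HB Require Import structures.
From mathcomp Require Import all_boot all_order all_algebra.
Set Implicit Arguments. Unset Strict Implicit. Unset Printing Implicit Defensive.
Import GRing.Theory.
Local Open Scope ring_scope.

Lemma addf0 (V W : zmodType) (f : V -> W) :
  (forall x y, f (x + y) = f x + f y) -> f 0 = 0.
Proof. move=> h; apply: (addrI (f 0)); by rewrite -h !addr0. Qed.
Lemma addfN (V W : zmodType) (f : V -> W) :
  (forall x y, f (x + y) = f x + f y) -> forall x, f (- x) = - f x.
Proof. move=> h x; apply: (addrI (f x)); by rewrite -h !subrr (addf0 h). Qed.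
Lemma lAM0l G (y : gM G) : lAM 0 y = 0. Proof. exact: (addf0 (fun u v => lAM_addl u v y)). Qed.
Lemma lAM0r G (x : gA G) : lAM x 0 = 0. Proof. exact: (addf0 (lAM_addr x)). Qed.
Lemma lAMNl G (x : gA G) (y : gM G) : lAM (- x) y = - lAM x y. Proof. exact: (addfN (fun u v => lAM_addl u v y)). Qed.
Lemma lAMNr G (x : gA G) (y : gM G) : lAM x (- y) = - lAM x y. Proof. exact: (addfN (lAM_addr x)). Qed.
Lemma lAMBl G (x x' : gA G) (y : gM G) : lAM (x - x') y = lAM x y - lAM x' y. Proof. by rewrite lAM_addl lAMNl. Qed.
Lemma lAMBr G (x : gA G) (y y' : gM G) : lAM x (y - y') = lAM x y - lAM x y'. Proof. by rewrite lAM_addr lAMNr. Qed.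
Lemma rMB0l G (y : gB G) : rMB 0 y = 0. Proof. exact: (addf0 (fun u v => rMB_addl u v y)). Qed.
Lemma rMB0r G (x : gM G) : rMB x 0 = 0. Proof. exact: (addf0 (rMB_addr x)). Qed.
Lemma rMBNl G (x : gM G) (y : gB G) : rMB (- x) y = - rMB x y. Proof. exact: (addfN (fun u v => rMB_addl u v y)). Qed.
Lemma rMBNr G (x : gM G) (y : gB G) : rMB x (- y) = - rMB x y. Proof. exact: (addfN (rMB_addr x)). Qed.
Lemma rMBBl G (x x' : gM G) (y : gB G) : rMB (x - x') y = rMB x y - rMB x' y. Proof. by rewrite rMB_addl rMBNl. Qed.
Lemma rMBBr G (x : gM G) (y y' : gB G) : rMB x (y - y') = rMB x y - rMB x y'. Proof. by rewrite rMB_addr rMBNr. Qed.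
Lemma lBN0l G (y : gN G) : lBN 0 y = 0. Proof. exact: (addf0 (fun u v => lBN_addl u v y)). Qed.
Lemma lBN0r G (x : gB G) : lBN x 0 = 0. Proof. exact: (addf0 (lBN_addr x)). Qed.
Lemma lBNNl G (x : gB G) (y : gN G) : lBN (- x) y = - lBN x y. Proof. exact: (addfN (fun u v => lBN_addl u v y)). Qed.
Lemma lBNNr G (x : gB G) (y : gN G) : lBN x (- y) = - lBN x y. Proof. exact: (addfN (lBN_addr x)). Qed.
Lemma lBNBl G (x x' : gB G) (y : gN G) : lBN (x - x') y = lBN x y - lBN x' y. Proof. by rewrite lBN_addl lBNNl. Qed.
Lemma lBNBr G (x : gB G) (y y' : gN G) : lBN x (y - y') = lBN x y - lBN x y'. Proof. by rewrite lBN_addr lBNNr. Qed.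
Lemma rNA0l G (y : gA G) : rNA 0 y = 0. Proof. exact: (addf0 (fun u v => rNA_addl u v y)). Qed.
Lemma rNA0r G (x : gN G) : rNA x 0 = 0. Proof. exact: (addf0 (rNA_addr x)). Qed.
Lemma rNANl G (x : gN G) (y : gA G) : rNA (- x) y = - rNA x y. Proof. exact: (addfN (fun u v => rNA_addl u v y)). Qed.
Lemma rNANr G (x : gN G) (y : gA G) : rNA x (- y) = - rNA x y. Proof. exact: (addfN (rNA_addr x)). Qed.
Lemma rNABl G (x x' : gN G) (y : gA G) : rNA (x - x') y = rNA x y - rNA x' y. Proof. by rewrite rNA_addl rNANl. Qed.
Lemma rNABr G (x : gN G) (y y' : gA G) : rNA x (y - y') = rNA x y - rNA x y'. Proof. by rewrite rNA_addr rNANr. Qed.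
Lemma pMN0l G (y : gN G) : pMN 0 y = 0. Proof. exact: (addf0 (fun u v => pMN_addl u v y)). Qed.
Lemma pMN0r G (x : gM G) : pMN x 0 = 0. Proof. exact: (addf0 (pMN_addr x)). Qed.
Lemma pMNNl G (x : gM G) (y : gN G) : pMN (- x) y = - pMN x y. Proof. exact: (addfN (fun u v => pMN_addl u v y)). Qed.
Lemma pMNNr G (x : gM G) (y : gN G) : pMN x (- y) = - pMN x y. Proof. exact: (addfN (pMN_addr x)). Qed.
Lemma pMNBl G (x x' : gM G) (y : gN G) : pMN (x - x') y = pMN x y - pMN x' y. Proof. by rewrite pMN_addl pMNNl. Qed.
Lemma pMNBr G (x : gM G) (y y' : gN G) : pMN x (y - y') = pMN x y - pMN x y'. Proof. by rewrite pMN_addr pMNNr. Qed.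
Lemma pNM0l G (y : gM G) : pNM 0 y = 0. Proof. exact: (addf0 (fun u v => pNM_addl u v y)). Qed.
Lemma pNM0r G (x : gN G) : pNM x 0 = 0. Proof. exact: (addf0 (pNM_addr x)). Qed.
Lemma pNMNl G (x : gN G) (y : gM G) : pNM (- x) y = - pNM x y. Proof. exact: (addfN (fun u v => pNM_addl u v y)). Qed.
Lemma pNMNr G (x : gN G) (y : gM G) : pNM x (- y) = - pNM x y. Proof. exact: (addfN (pNM_addr x)). Qed.
Lemma pNMBl G (x x' : gN G) (y : gM G) : pNM (x - x') y = pNM x y - pNM x' y. Proof. by rewrite pNM_addl pNMNl. Qed.
Lemma pNMBr G (x : gN G) (y y' : gM G) : pNM x (y - y') = pNM x y - pNM x y'. Proof. by rewrite pNM_addr pNMNr. Qed.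

Lemma mat_ext G (X Y : mat G) : e11 X = e11 Y -> e12 X = e12 Y -> e21 X = e21 Y -> e22 X = e22 Y -> X = Y.
Proof. by case: X => ????; case: Y => ???? /= -> -> -> ->. Qed.

Definition mat_tup G (X : mat G) := (e11 X, e12 X, e21 X, e22 X).
Definition tup_mat G (t : gA G * gM G * gN G * gB G) : mat G := Mat t.1.1.1 t.1.1.2 t.1.2 t.2.
Lemma mat_tupK G : cancel (@mat_tup G) (@tup_mat G). Proof. by case. Qed.

HB.instance Definition _ G := Equality.copy (mat G) (can_type (@mat_tupK G)).
HB.instance Definition _ G := Choice.copy (mat G) (can_type (@mat_tupK G)).

Ltac zs := rewrite ?(mulr0, mul0r, addr0, add0r, oppr0, subr0, sub0r, mulr1, mul1r, opprK,
  lAM0l, lAM0r, rMB0l, rMB0r, lBN0l, lBN0r, rNA0l, rNA0r, pMN0l, pMN0r, pNM0l, pNM0r,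
  lAM_1, rMB_1, lBN_1, rNA_1, mulrN, mulNr, lAMNl, lAMNr, rMBNl, rMBNr, lBNNl, lBNNr, rNANl, rNANr,
  pMNNl, pMNNr, pNMNl, pNMNr).

Ltac ac_front a := match goal with
 | |- _ = ?c + _ => unify c a
 | |- _ = ?c => unify c a
 | |- _ => first [rewrite [in RHS](addrCA _ a) | rewrite [in RHS](addrC _ a)]; ac_front a end.
Ltac ac_loop := first [ reflexivity | lazymatch goal with |- ?a + _ = _ => ac_front a; congr (_ + _); ac_loop end ].
Ltac ac := rewrite -?addrA; ac_loop.

Lemma actest (V : zmodType) (a b c d e : V) : a + (b + c) + (d + e) = e + c + (b + d + a).
Proof. ac. Qed.

Ltac front_L a := match goal with
 | |- ?c + _ = _ => unify c a
 | |- ?c = _ => unify c a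
 | |- _ => first [rewrite [in LHS](addrCA _ a) | rewrite [in LHS](addrC _ a)]; front_L a end.
Ltac canc1 := match goal with
 | |- context [?a + ?r] => match r with context [- ?b] => unify a b; front_L (- a); front_L a; rewrite ?addNKr ?addrN end
 | |- context [- ?c + ?r] => match r with context [?b] => unify b c; front_L c; front_L (- c); rewrite ?addKr ?addNr end
 end.
Ltac canc := rewrite -?addrA; repeat (canc1; rewrite -?addrA).
Lemma solve_helper (V : zmodType) (S t1 t2 : V) : S = 0 -> t1 - t2 - S = 0 -> t1 = t2.
Proof. move=> -> ; rewrite subr0 => /eqP; rewrite subr_eq0 => /eqP //. Qed.
Ltac solve_by h := refine (@solve_helper _ _ _ _ h _); rewrite ?opprD ?opprK; zs; rewrite ?opprD ?opprK; canc; try done.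
Lemma solve_helper2 (V : zmodType) (S t1 t2 : V) : S = 0 -> t1 - t2 + S = 0 -> t1 = t2.
Proof. move=> -> ; rewrite addr0 => /eqP; rewrite subr_eq0 => /eqP //. Qed.
Ltac solve_by2 h := refine (@solve_helper2 _ _ _ _ h _); rewrite ?opprD ?opprK; zs; rewrite ?opprD ?opprK; canc; try done.
Lemma eq_sub0 (V : zmodType) (x y : V) : x = y -> x - y = 0. Proof. by move=> ->; rewrite subrr. Qed.
Ltac solveb h := first [ solve_by h; done | solve_by2 h; done | solve_by (eq_sub0 h); done | solve_by2 (eq_sub0 h); done ].

Lemma maddA G : associative (@madd G).
Proof. move=> X Y Z; apply: mat_ext => /=; exact: addrA. Qed.
Lemma maddC G : commutative (@madd G).
Proof. move=> X Y; apply: mat_ext => /=; exact: addrC. Qed.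
Lemma madd0 G : left_id (mzero G) (@madd G).
Proof. move=> X; apply: mat_ext => /=; exact: add0r. Qed.
Lemma maddN G : left_inverse (mzero G) (@mopp G) (@madd G).
Proof. move=> X; apply: mat_ext => /=; exact: addNr. Qed.
Lemma mmulA G : associative (@mmul G).
Proof.
move=> X Y Z; apply: mat_ext => /=.
- by rewrite mulrDl mulrDr pMN_addl pMN_addr !mulrA pMN_lA pMN_rA pMN_bal; ac.
- by rewrite lAM_addl lAM_addr rMB_addl rMB_addr !lAM_mul !rMB_mul !M_bimod assoc_MNM; ac.
- by rewrite lBN_addl lBN_addr rNA_addl rNA_addr !lBN_mul !rNA_mul !N_bimod assoc_NMN; ac.
- by rewrite mulrDl mulrDr pNM_addl pNM_addr !mulrA pNM_lB pNM_rB pNM_bal; ac.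
Qed.
Lemma mmul1 G : left_id (mone G) (@mmul G).
Proof. move=> X; apply: mat_ext => /=; by zs. Qed.
Lemma mmulr1 G : right_id (mone G) (@mmul G).
Proof. move=> X; apply: mat_ext => /=; by zs. Qed.
Lemma mmulDl G : left_distributive (@mmul G) (@madd G).
Proof.
move=> X Y Z; apply: mat_ext => /=.
- by rewrite mulrDl pMN_addl; ac.
- by rewrite lAM_addl rMB_addl; ac.
- by rewrite lBN_addl rNA_addl; ac.
- by rewrite mulrDl pNM_addl; ac.
Qed.
Lemma mmulDr G : right_distributive (@mmul G) (@madd G).
Proof.
move=> X Y Z; apply: mat_ext => /=.
- by rewrite mulrDr pMN_addr; ac.
- by rewrite lAM_addr rMB_addr; ac.
- by rewrite lBN_addr rNA_addr; ac.
- by rewrite mulrDr pNM_addr; ac.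
Qed.

HB.instance Definition _ G := GRing.isPzRing.Build (mat G)
  (@maddA G) (@maddC G) (@madd0 G) (@maddN G) (@mmulA G) (@mmul1 G) (@mmulr1 G) (@mmulDl G) (@mmulDr G).

Lemma maddE G (X Y : mat G) : madd X Y = X + Y. Proof. by []. Qed.
Lemma mmulE G (X Y : mat G) : mmul X Y = X * Y. Proof. by []. Qed.
Lemma mzeroE G : mzero G = 0. Proof. by []. Qed.
Lemma moneE G : mone G = 1. Proof. by []. Qed.
Lemma moppE G (X : mat G) : mopp X = - X. Proof. by []. Qed.
Lemma msubE G (X Y : mat G) : msub X Y = X - Y. Proof. by []. Qed.
Lemma mcircE G (X Y : mat G) : mcirc X Y = X * Y + Y * X. Proof. by []. Qed.
Lemma mlieE G (X Y : mat G) : mlie X Y = X * Y - Y * X. Proof. by []. Qed.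

Definition iA G (a : gA G) : mat G := Mat a 0 0 0.
Definition iM G (m : gM G) : mat G := Mat 0 m 0 0.
Definition iN G (n : gN G) : mat G := Mat 0 0 n 0.
Definition iB G (b : gB G) : mat G := Mat 0 0 0 b.

Definition hypz G (phi : mat G -> mat G) := forall U V, mmul U V = mzero G -> mmul V U = mzero G ->
     madd (mcirc (phi U) V) (mcirc U (phi V)) = mzero G.
Definition addf G (phi : mat G -> mat G) := forall X Y, phi (madd X Y) = madd (phi X) (phi Y).

Lemma stepA G (phi : mat G -> mat G) (hA : two_torsion_free (gA G)) (hB : two_torsion_free (gB G))
  (hz : hypz phi) :
  (forall b, e11 (phi (iB b)) = 0) /\ (forall a, e22 (phi (iA a)) = 0) /\
  (forall a, e12 (phi (iA a)) = - lAM a (e12 (phi (P2 G)))) /\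
  (forall b, e12 (phi (iB b)) = rMB (e12 (phi (P2 G))) b) /\
  (forall a, e21 (phi (iA a)) = rNA (e21 (phi (P1 G))) a) /\
  (forall b, e21 (phi (iB b)) = - lBN b (e21 (phi (P1 G)))).
Proof.
have H a b := hz (iA a) (iB b) (ltac:(by apply: mat_ext => /=; zs)) (ltac:(by apply: mat_ext => /=; zs)).
have H11 a b := congr1 (@e11 G) (H a b).
have H12 a b := congr1 (@e12 G) (H a b).
have H21 a b := congr1 (@e21 G) (H a b).
have H22 a b := congr1 (@e22 G) (H a b).
simpl in H11, H12, H21, H22.
have e3 : forall a, e12 (phi (iA a)) = - lAM a (e12 (phi (P2 G))).
  move=> a; have := H12 a 1; zs; move/eqP; rewrite addr_eq0 => /eqP //.
have e6 : forall b, e21 (phi (iB b)) = - lBN b (e21 (phi (P1 G))).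
  move=> b; have := H21 1 b; zs; move/eqP; rewrite addrC addr_eq0 => /eqP //.
split; [|split; [|split; [|split; [|split]]]] => //.
- move=> b; apply: hA; have := H11 1 b; zs; done.
- move=> a; apply: hB; have := H22 a 1; zs; done.
- move=> b; have := H12 1 b; zs; rewrite (e3 1) lAM_1 rMBNl; move/eqP; rewrite addrC addr_eq0 opprK => /eqP //.
- move=> a; have := H21 a 1; zs; rewrite (e6 1) lBN_1 rNANl; move/eqP; rewrite addr_eq0 opprK => /eqP //.
Qed.

Definition swapG (G : GMR) : GMR :=
  @Build_GMR (gB G) (gA G) (gN G) (gM G) (@lBN G) (@rNA G) (@lAM G) (@rMB G) (@pNM G) (@pMN G)
  (@lBN_addl G) (@lBN_addr G) (@lBN_mul G) (@lBN_1 G)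
  (@rNA_addl G) (@rNA_addr G) (@rNA_mul G) (@rNA_1 G) (@N_bimod G)
  (@lAM_addl G) (@lAM_addr G) (@lAM_mul G) (@lAM_1 G)
  (@rMB_addl G) (@rMB_addr G) (@rMB_mul G) (@rMB_1 G) (@M_bimod G)
  (@pNM_addl G) (@pNM_addr G) (@pNM_lB G) (@pNM_rB G) (@pNM_bal G)
  (@pMN_addl G) (@pMN_addr G) (@pMN_lA G) (@pMN_rA G) (@pMN_bal G)
  (@assoc_NMN G) (@assoc_MNM G).

Definition swapM G (X : mat G) : mat (swapG G) := @Mat (swapG G) (e22 X) (e21 X) (e12 X) (e11 X).
Definition unswapM G (X : mat (swapG G)) : mat G := @Mat G (e22 X) (e21 X) (e12 X) (e11 X).
Definition phiS G (phi : mat G -> mat G) : mat (swapG G) -> mat (swapG G) :=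
  fun X => swapM (phi (unswapM X)).

Lemma swapK G (X : mat (swapG G)) : swapM (unswapM X) = X. Proof. by case: X. Qed.
Lemma unswap_mul G (X Y : mat (swapG G)) : unswapM (mmul X Y) = mmul (unswapM X) (unswapM Y).
Proof. by apply: mat_ext => /=; rewrite addrC. Qed.
Lemma swap_mul G (X Y : mat G) : swapM (mmul X Y) = mmul (swapM X) (swapM Y).
Proof. by apply: mat_ext => /=; rewrite addrC. Qed.
Lemma swap_add G (X Y : mat G) : swapM (madd X Y) = madd (swapM X) (swapM Y).
Proof. by apply: mat_ext. Qed.

Lemma hypzS G (phi : mat G -> mat G) : hypz phi -> hypz (phiS phi).
Proof.
move=> hz U V hUV hVU.
have h1 : mmul (unswapM U) (unswapM V) = mzero G by rewrite -unswap_mul hUV; apply: mat_ext.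
have h2 : mmul (unswapM V) (unswapM U) = mzero G by rewrite -unswap_mul hVU; apply: mat_ext.
have := congr1 (@swapM G) (hz _ _ h1 h2).
rewrite /mcirc !swap_add !swap_mul !swapK /phiS => ->; by apply: mat_ext.
Qed.
Lemma addfS G (phi : mat G -> mat G) : addf phi -> addf (phiS phi).
Proof.
move=> h X Y; rewrite /phiS.
have -> : unswapM (madd X Y) = madd (unswapM X) (unswapM Y) by apply: mat_ext.
by rewrite h swap_add.
Qed.

Lemma phi0 G (phi : mat G -> mat G) (ad : addf phi) : phi (mzero G) = mzero G.
Proof.
have h := ad (mzero G) (mzero G).
have e : madd (mzero G) (mzero G) = mzero G by apply: mat_ext => /=; rewrite addr0.
rewrite e maddE in h; apply: (addrI (phi (mzero G))).
by rewrite -h mzeroE addr0.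
Qed.
Lemma phiN G (phi : mat G -> mat G) (ad : addf phi) X : phi (mopp X) = mopp (phi X).
Proof.
have h := ad X (mopp X).
have e : madd X (mopp X) = mzero G by rewrite maddE moppE subrr.
rewrite e phi0 // maddE in h.
apply: (addrI (phi X)); by rewrite -h moppE subrr.
Qed.

Lemma iA_add G (x y : gA G) : iA (x + y) = madd (iA x) (iA y). Proof. by apply: mat_ext => /=; zs. Qed.
Lemma iM_add G (x y : gM G) : iM (x + y) = madd (iM x) (iM y). Proof. by apply: mat_ext => /=; zs. Qed.
Lemma iN_add G (x y : gN G) : iN (x + y) = madd (iN x) (iN y). Proof. by apply: mat_ext => /=; zs. Qed.
Lemma iB_add G (x y : gB G) : iB (x + y) = madd (iB x) (iB y). Proof. by apply: mat_ext => /=; zs. Qed.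
Lemma iA_opp G (x : gA G) : iA (- x) = mopp (iA x). Proof. by apply: mat_ext => /=; zs. Qed.
Lemma iM_opp G (x : gM G) : iM (- x) = mopp (iM x). Proof. by apply: mat_ext => /=; zs. Qed.
Lemma iN_opp G (x : gN G) : iN (- x) = mopp (iN x). Proof. by apply: mat_ext => /=; zs. Qed.
Lemma iB_opp G (x : gB G) : iB (- x) = mopp (iB x). Proof. by apply: mat_ext => /=; zs. Qed.

Lemma stepB0 G (phi : mat G -> mat G) (hz : hypz phi) m m' :
  pMN m (e21 (phi (iM m'))) + pMN m' (e21 (phi (iM m))) = 0 /\
  pNM (e21 (phi (iM m))) m' + pNM (e21 (phi (iM m'))) m = 0.
Proof.
have H := hz (iM m) (iM m') (ltac:(by apply: mat_ext => /=; zs)) (ltac:(by apply: mat_ext => /=; zs)).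
have H11 := congr1 (@e11 G) H. have H22 := congr1 (@e22 G) H.
simpl in H11, H22. move: H11 H22; zs => h1 h2; split => //; by rewrite addrC.
Qed.

Ltac sh := match goal with |- ?g => idtac "GOAL:" g end.

Lemma stepB_eqs G (phi : mat G -> mat G) (hz : hypz phi) (ad : addf phi) (a : gA G) (m : gM G) (b : gB G) :
 (- pMN (rMB m b) (e21 (phi (iA a)) + e21 (phi (iM (lAM a m)))) +
 (a * (e11 (phi (iB b)) - e11 (phi (iM (rMB m b)))) +
  pMN (lAM a m) (e21 (phi (iB b)) - e21 (phi (iM (rMB m b)))) +
  (e11 (phi (iB b)) - e11 (phi (iM (rMB m b)))) * a) =
 0) /\
 (- lAM (e11 (phi (iA a)) + e11 (phi (iM (lAM a m)))) (rMB m b) +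
 rMB (e12 (phi (iA a)) + e12 (phi (iM (lAM a m)))) b -
 rMB (rMB m b) (e22 (phi (iA a)) + e22 (phi (iM (lAM a m)))) +
 (lAM a (e12 (phi (iB b)) - e12 (phi (iM (rMB m b)))) +
  rMB (lAM a m) (e22 (phi (iB b)) - e22 (phi (iM (rMB m b)))) +
  lAM (e11 (phi (iB b)) - e11 (phi (iM (rMB m b)))) (lAM a m)) =
 0) /\
 (lBN b (e21 (phi (iA a)) + e21 (phi (iM (lAM a m)))) +
 rNA (e21 (phi (iB b)) - e21 (phi (iM (rMB m b)))) a = 0) /\
 (- pNM (e21 (phi (iA a)) + e21 (phi (iM (lAM a m)))) (rMB m b) +
 (e22 (phi (iA a)) + e22 (phi (iM (lAM a m)))) * b +
 b * (e22 (phi (iA a)) + e22 (phi (iM (lAM a m)))) +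
 pNM (e21 (phi (iB b)) - e21 (phi (iM (rMB m b)))) (lAM a m) = 0).
Proof.
have hUV : mmul (madd (iA a) (iM (lAM a m))) (madd (iB b) (iM (- rMB m b))) = mzero G.
  by apply: mat_ext => /=; zs; rewrite ?M_bimod ?subrr ?addNr.
have hVU : mmul (madd (iB b) (iM (- rMB m b))) (madd (iA a) (iM (lAM a m))) = mzero G.
  by apply: mat_ext => /=; zs.
have H := hz _ _ hUV hVU.
rewrite !ad iM_opp (phiN ad) in H.
have H11 := congr1 (@e11 G) H. have H22 := congr1 (@e22 G) H.
have H12 := congr1 (@e12 G) H. have H21 := congr1 (@e21 G) H.
simpl in H11, H12, H21, H22. move: H11 H12 H21 H22; zs. by move=> *; split; [|split; [|split]].
Qed.

Lemma stepB_q G (phi : mat G -> mat G) (hA : two_torsion_free (gA G)) (hB : two_torsion_free (gB G))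
  (hz : hypz phi) (ad : addf phi) :
  (forall m b, e21 (phi (iM (rMB m b))) = lBN b (e21 (phi (iM m)))) /\
  (forall a m, e21 (phi (iM (lAM a m))) = rNA (e21 (phi (iM m))) a).
Proof.
have [sB1 [sA2 [sA12 [sB12 [sA21 sB21]]]]] := stepA hA hB hz.
split => [m b | a m].
- have [_ [_ [H _]]] := stepB_eqs hz ad 1 m b. move: H.
  rewrite lAM_1 sA21 sB21 lBN_addr rNA_addl rNANl !rNA_1 => H; symmetry; solve_by H.
- have [_ [_ [H _]]] := stepB_eqs hz ad a m 1. move: H.
  rewrite rMB_1 sA21 sB21 !lBN_1 rNA_addl rNANl => H; solve_by H.
Qed.


Lemma stepB_pr G (phi : mat G -> mat G) (hA : two_torsion_free (gA G)) (hB : two_torsion_free (gB G))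
  (hz : hypz phi) (ad : addf phi) :
  (forall m, e11 (phi (iM m)) = - pMN m (e21 (phi (P1 G)))) /\
  (forall m, e22 (phi (iM m)) = pNM (e21 (phi (P1 G))) m).
Proof.
have [sB1 [sA2 [sA12 [sB12 [sA21 sB21]]]]] := stepA hA hB hz.
split => m.
- have [H _] := stepB_eqs hz ad 1 m 1.
  have [h0 _] := stepB0 hz m m.
  have h1 : pMN m (e21 (phi (iM m))) = 0 by apply: hA.
  move: H; rewrite !lAM_1 !rMB_1 sA21 sB21 sB1 !rNA_1 !lBN_1 !pMN_addr !pMNNr h1 => H.
  apply/eqP; rewrite -addr_eq0; apply/eqP; apply: hA; solveb H.
- have [_ [_ [_ H]]] := stepB_eqs hz ad 1 m 1.
  have [_ h0] := stepB0 hz m m.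
  have h1 : pNM (e21 (phi (iM m))) m = 0 by apply: hB.
  move: H; rewrite !lAM_1 !rMB_1 sA21 sB21 sA2 !rNA_1 !lBN_1 !pNM_addl !pNMNl h1 => H.
  apply/eqP; rewrite -subr_eq0; apply/eqP; apply: hB; solveb H.
Qed.

Lemma stepB_f G (phi : mat G -> mat G) (hA : two_torsion_free (gA G)) (hB : two_torsion_free (gB G))
  (hz : hypz phi) (ad : addf phi) a m b :
  rMB (e12 (phi (iM (lAM a m)))) b = lAM (e11 (phi (iA a))) (rMB m b) + lAM a (e12 (phi (iM (rMB m b))))
     - lAM a (rMB m (e22 (phi (iB b)))).
Proof.
have [sB1 [sA2 [sA12 [sB12 [sA21 sB21]]]]] := stepA hA hB hz.
have [p r] := stepB_pr hA hB hz ad.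
have [_ [H _]] := stepB_eqs hz ad a m b.
move: H; rewrite sA12 sB12 sA2 sB1 !p !r; zs.
rewrite !lAM_addl !rMB_addr !lAM_addr !rMB_addl; zs; rewrite !assoc_MNM !M_bimod => H.
solveb H.
Qed.

Lemma stepB_fc G (phi : mat G -> mat G) (hA : two_torsion_free (gA G)) (hB : two_torsion_free (gB G))
  (hz : hypz phi) (ad : addf phi) :
  (forall a m, e12 (phi (iM (lAM a m))) = lAM (e11 (phi (iA a))) m + lAM a (e12 (phi (iM m)))
     - lAM a (rMB m (e22 (phi (P2 G))))) /\
  (forall m b, e12 (phi (iM (rMB m b))) = rMB (e12 (phi (iM m))) b - lAM (e11 (phi (P1 G))) (rMB m b)
     + rMB m (e22 (phi (iB b)))) /\
  (forall m, lAM (e11 (phi (P1 G))) m = rMB m (e22 (phi (P2 G)))).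
Proof.
have hf := stepB_f hA hB hz ad.
split; [|split].
- move=> a m; have := hf a m 1; rewrite !rMB_1 => ->; done.
- move=> m b; have := hf 1 m b; rewrite !lAM_1 => H; solveb H.
- move=> m; have := hf 1 m 1; rewrite !lAM_1 !rMB_1 => H.
  apply/eqP; rewrite -subr_eq0; apply/eqP; solveb H.
Qed.

Lemma stepN G (phi : mat G -> mat G) (hA : two_torsion_free (gA G)) (hB : two_torsion_free (gB G))
  (hz : hypz phi) (ad : addf phi) :
  (forall n n', pNM n (e12 (phi (iN n'))) + pNM n' (e12 (phi (iN n))) = 0 /\
     pMN (e12 (phi (iN n))) n' + pMN (e12 (phi (iN n'))) n = 0) /\
  ((forall n a, e12 (phi (iN (rNA n a))) = lAM a (e12 (phi (iN n)))) /\
   (forall b n, e12 (phi (iN (lBN b n))) = rMB (e12 (phi (iN n))) b)) /\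
  ((forall n, e22 (phi (iN n)) = - pNM n (e12 (phi (P2 G)))) /\
   (forall n, e11 (phi (iN n)) = pMN (e12 (phi (P2 G))) n)) /\
  ((forall b n, e21 (phi (iN (lBN b n))) = lBN (e22 (phi (iB b))) n + lBN b (e21 (phi (iN n)))
     - lBN b (rNA n (e11 (phi (P1 G))))) /\
  (forall n a, e21 (phi (iN (rNA n a))) = rNA (e21 (phi (iN n))) a - lBN (e22 (phi (P2 G))) (rNA n a)
     + rNA n (e11 (phi (iA a)))) /\
  (forall n, lBN (e22 (phi (P2 G))) n = rNA n (e11 (phi (P1 G))))).
Proof.
have hz' := hypzS hz. have ad' := addfS ad.
split; [|split; [|split]].
- exact: (stepB0 (G:=swapG G) (phi:=phiS phi) hz').
- exact: (stepB_q (G:=swapG G) (phi:=phiS phi) hB hA hz' ad').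
- exact: (stepB_pr (G:=swapG G) (phi:=phiS phi) hB hA hz' ad').
- exact: (stepB_fc (G:=swapG G) (phi:=phiS phi) hB hA hz' ad').
Qed.

Ltac zcanc := apply/eqP; rewrite -subr_eq0; apply/eqP; rewrite ?opprD ?opprK; zs; rewrite ?opprD ?opprK; canc; try done.

Definition c1 G (phi : mat G -> mat G) := e11 (phi (P1 G)).
Definition c2 G (phi : mat G -> mat G) := e22 (phi (P2 G)).
Definition d1 G (phi : mat G -> mat G) a := e11 (phi (iA a)) - c1 phi * a.
Definition d2 G (phi : mat G -> mat G) b := e22 (phi (iB b)) - c2 phi * b.
Definition Fm G (phi : mat G -> mat G) m := e12 (phi (iM m)) - lAM (c1 phi) m.
Definition qm G (phi : mat G -> mat G) m := e21 (phi (iM m)).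
Definition Sn G (phi : mat G -> mat G) n := e12 (phi (iN n)).
Definition Gn G (phi : mat G -> mat G) n := e21 (phi (iN n)) - lBN (c2 phi) n.

Lemma compD G (phi : mat G -> mat G) (ad : addf phi) :
  (forall x y, e11 (phi (iA (x + y))) = e11 (phi (iA x)) + e11 (phi (iA y))) /\
  (forall x y, e22 (phi (iB (x + y))) = e22 (phi (iB x)) + e22 (phi (iB y))) /\
  (forall x y, e12 (phi (iM (x + y))) = e12 (phi (iM x)) + e12 (phi (iM y))) /\
  (forall x y, e21 (phi (iM (x + y))) = e21 (phi (iM x)) + e21 (phi (iM y))) /\
  (forall x y, e12 (phi (iN (x + y))) = e12 (phi (iN x)) + e12 (phi (iN y))) /\
  (forall x y, e21 (phi (iN (x + y))) = e21 (phi (iN x)) + e21 (phi (iN y))).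
Proof.
by repeat split; move=> x y; rewrite ?iA_add ?iB_add ?iM_add ?iN_add ad.
Qed.
Lemma compN G (phi : mat G -> mat G) (ad : addf phi) :
  (forall x, e11 (phi (iA (- x))) = - e11 (phi (iA x))) /\
  (forall x, e22 (phi (iB (- x))) = - e22 (phi (iB x))) /\
  (forall x, e12 (phi (iM (- x))) = - e12 (phi (iM x))) /\
  (forall x, e21 (phi (iM (- x))) = - e21 (phi (iM x))) /\
  (forall x, e12 (phi (iN (- x))) = - e12 (phi (iN x))) /\
  (forall x, e21 (phi (iN (- x))) = - e21 (phi (iN x))).
Proof.
by repeat split; move=> x; rewrite ?iA_opp ?iB_opp ?iM_opp ?iN_opp (phiN ad).
Qed.

Definition Hs G (phi : mat G -> mat G) := two_torsion_free (gA G) /\ two_torsion_free (gB G) /\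
  M_faithful G /\ hypz phi /\ addf phi.

Lemma L_central G (phi : mat G -> mat G) (H : Hs phi) :
  (forall m, lAM (c1 phi) m = rMB m (c2 phi)) /\ (forall n, lBN (c2 phi) n = rNA n (c1 phi)) /\
  (forall a, c1 phi * a = a * c1 phi) /\ (forall b, c2 phi * b = b * c2 phi).
Proof.
case: H => hA [hB [[hMl hMr] [hz ad]]].
have [_ [_ cM]] := stepB_fc hA hB hz ad.
have [_ [_ [_ [_ [_ cN]]]]] := stepN hA hB hz ad.
split; [exact: cM | split; [exact: cN | split]].
- move=> a; apply/eqP; rewrite -subr_eq0; apply/eqP; apply: hMl => m.
  by rewrite lAMBl !lAM_mul !cM -M_bimod subrr.
- move=> b; apply/eqP; rewrite -subr_eq0; apply/eqP; apply: hMr => m.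
  by rewrite rMBBr !rMB_mul -cM M_bimod cM subrr.
Qed.

Lemma L_add G (phi : mat G -> mat G) (H : Hs phi) :
  (forall x y, d1 phi (x + y) = d1 phi x + d1 phi y) /\ (forall x, d1 phi (- x) = - d1 phi x) /\
  (forall x y, d2 phi (x + y) = d2 phi x + d2 phi y) /\ (forall x, d2 phi (- x) = - d2 phi x) /\
  (forall x y, Fm phi (x + y) = Fm phi x + Fm phi y) /\ (forall x, Fm phi (- x) = - Fm phi x) /\
  (forall x y, qm phi (x + y) = qm phi x + qm phi y) /\ (forall x, qm phi (- x) = - qm phi x) /\
  (forall x y, Sn phi (x + y) = Sn phi x + Sn phi y) /\ (forall x, Sn phi (- x) = - Sn phi x) /\
  (forall x y, Gn phi (x + y) = Gn phi x + Gn phi y) /\ (forall x, Gn phi (- x) = - Gn phi x) /\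
  d1 phi 1 = 0 /\ d2 phi 1 = 0.
Proof.
case: H => hA [hB [_ [hz ad]]].
have [a1 [a2 [a3 [a4 [a5 a6]]]]] := compD ad.
have [n1 [n2 [n3 [n4 [n5 n6]]]]] := compN ad.
rewrite /d1 /d2 /Fm /qm /Sn /Gn.
repeat split; try move=> x; try move=> y;
  rewrite ?a1 ?a2 ?a3 ?a4 ?a5 ?a6 ?n1 ?n2 ?n3 ?n4 ?n5 ?n6 ?mulrDr ?mulrN ?lAM_addr ?lBN_addr ?lAMNr ?lBNNr;
  rewrite ?mulr1 /c1 /c2 ?subrr //; zcanc.
Qed.

Lemma L_rel G (phi : mat G -> mat G) (H : Hs phi) :
  (forall a m, Fm phi (lAM a m) = lAM (d1 phi a) m + lAM a (Fm phi m)) /\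
  (forall m b, Fm phi (rMB m b) = rMB (Fm phi m) b + rMB m (d2 phi b)) /\
  (forall b n, Gn phi (lBN b n) = lBN (d2 phi b) n + lBN b (Gn phi n)) /\
  (forall n a, Gn phi (rNA n a) = rNA (Gn phi n) a + rNA n (d1 phi a)).
Proof.
have [cM [cN [cA cB]]] := L_central H.
case: H => hA [hB [_ [hz ad]]].
have [f1 [f2 _]] := stepB_fc hA hB hz ad.
have [_ [_ [_ [g1 [g2 _]]]]] := stepN hA hB hz ad.
rewrite /Fm /Gn /d1 /d2 -/(c1 phi) -/(c2 phi) in f1 f2 g1 g2 *.
split; [|split; [|split]].
- move=> a m; rewrite f1 lAMBl lAMBr !lAM_mul !cM !M_bimod; zcanc.
- move=> m b; rewrite f2 rMBBl rMBBr !cM -!rMB_mul !cB; zcanc.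
- move=> b n; rewrite g1 lBNBl lBNBr !lBN_mul !cN !N_bimod; zcanc.
- move=> n a; rewrite g2 rNABl rNABr !cN -!rNA_mul !cA; zcanc.
Qed.

Lemma L_q G (phi : mat G -> mat G) (H : Hs phi) :
  (forall a m, qm phi (lAM a m) = rNA (qm phi m) a) /\
  (forall m b, qm phi (rMB m b) = lBN b (qm phi m)) /\
  (forall n a, Sn phi (rNA n a) = lAM a (Sn phi n)) /\
  (forall b n, Sn phi (lBN b n) = rMB (Sn phi n) b) /\
  (forall m m', pMN m (qm phi m') + pMN m' (qm phi m) = 0) /\
  (forall m m', pNM (qm phi m) m' + pNM (qm phi m') m = 0) /\
  (forall n n', pNM n (Sn phi n') + pNM n' (Sn phi n) = 0) /\
  (forall n n', pMN (Sn phi n) n' + pMN (Sn phi n') n = 0) /\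
  (forall m, pMN m (qm phi m) = 0) /\ (forall m, pNM (qm phi m) m = 0) /\
  (forall n, pNM n (Sn phi n) = 0) /\ (forall n, pMN (Sn phi n) n = 0).
Proof.
case: H => hA [hB [_ [hz ad]]].
have [q1 q2] := stepB_q hA hB hz ad.
have [s0 [[s1 s2] _]] := stepN hA hB hz ad.
rewrite /qm /Sn.
have b0 := stepB0 hz.
do 4 (split; first by move=> *; rewrite ?q1 ?q2 ?s1 ?s2).
split; first by move=> x y; have [? ?] := b0 x y.
split; first by move=> x y; have [? ?] := b0 x y.
split; first by move=> x y; have [? ?] := s0 x y.
split; first by move=> x y; have [? ?] := s0 x y.
split; first by move=> m; apply: hA; have [-> _] := b0 m m.
split; first by move=> m; apply: hB; have [_ ->] := b0 m m.
split; first by move=> n; apply: hB; have [-> _] := s0 n n.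
by move=> n; apply: hA; have [_ ->] := s0 n n.
Qed.

Lemma L_der G (phi : mat G -> mat G) (H : Hs phi) :
  (forall a a', d1 phi (a * a') = d1 phi a * a' + a * d1 phi a') /\
  (forall b b', d2 phi (b * b') = d2 phi b * b' + b * d2 phi b').
Proof.
have [F1 [F2 _]] := L_rel H.
case: H => hA [hB [[hMl hMr] [hz ad]]].
split.
- move=> a a'; apply/eqP; rewrite -subr_eq0; apply/eqP; apply: hMl => m.
  have e : Fm phi (lAM a (lAM a' m)) = Fm phi (lAM (a * a') m) by rewrite lAM_mul.
  rewrite !F1 !lAM_addr !lAM_mul in e.
  rewrite lAMBl (lAM_addl (d1 phi a * a')) !lAM_mul; solveb e.
- move=> b b'; apply/eqP; rewrite -subr_eq0; apply/eqP; apply: hMr => m.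
  have e : Fm phi (rMB (rMB m b) b') = Fm phi (rMB m (b * b')) by rewrite rMB_mul.
  rewrite !F2 !rMB_addl !rMB_mul in e.
  rewrite rMBBr (rMB_addr m (d2 phi b * b')) !rMB_mul; solveb e.
Qed.

Lemma phi_decomp G (phi : mat G -> mat G) (ad : addf phi) a m n b :
  phi (Mat a m n b) = madd (madd (phi (iA a)) (phi (iM m))) (madd (phi (iN n)) (phi (iB b))).
Proof.
have -> : Mat a m n b = madd (madd (iA a) (iM m)) (madd (iN n) (iB b)) by apply: mat_ext => /=; zs.
by rewrite !ad.
Qed.

Lemma vphi_form G (phi : mat G -> mat G) (H : Hs phi) X :
  varphi phi X = Mat (d1 phi (e11 X)) (Fm phi (e12 X) + Sn phi (e21 X))
                     (qm phi (e12 X) + Gn phi (e21 X)) (d2 phi (e22 X)).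
Proof.
have [cM [cN [cA cB]]] := L_central H.
case: H => hA [hB [_ [hz ad]]].
have [sB1 [sA2 [sA12 [sB12 [sA21 sB21]]]]] := stepA hA hB hz.
have [p r] := stepB_pr hA hB hz ad.
have [_ [_ [[r' p'] _]]] := stepN hA hB hz ad.
rewrite /varphi /Tphi /d1 /d2 /Fm /Sn /qm /Gn /c1 /c2.
change (P1 G) with (iA (1 : gA G)); change (P2 G) with (iB (1 : gB G)).
have hI : phi (mone G) = madd (phi (iA 1)) (phi (iB 1)).
  have -> : mone G = madd (iA 1) (iB 1) by apply: mat_ext => /=; zs.
  by rewrite ad.
case: X => a m n b.
rewrite hI phi_decomp //.
move: sA12 sB12 sA21 sB21 p r p' r'.
set m0 := e12 (phi (iB 1)). set n0 := e21 (phi (iA 1)). clearbody m0 n0.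
move=> sA12 sB12 sA21 sB21 p r p' r'.
apply: mat_ext => /=; rewrite ?sB1 ?sA2 ?sA12 ?sB12 ?sA21 ?sB21 ?p ?r ?p' ?r'; zs; rewrite ?addNr ?subrr; zs; zcanc.
Qed.

Lemma circ_B (R : pzRingType) (U V x1 y1 x2 y2 : R) :
  (x1 * V + V * x1) + (U * y1 + y1 * U) = 0 -> (x2 * V + V * x2) + (U * y2 + y2 * U) = 0 ->
  ((x1 - x2) * V + V * (x1 - x2)) + (U * (y1 - y2) + (y1 - y2) * U) = 0.
Proof.
move=> h1 h2; rewrite !mulrBl !mulrBr.
have e : forall s t : R, s = 0 -> t = 0 -> s - t = 0 by move=> s t -> ->; rewrite subr0.
rewrite -(e _ _ h1 h2); zcanc.
Qed.
Lemma circ_D (R : pzRingType) (U V x1 y1 x2 y2 : R) :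
  (x1 * V + V * x1) + (U * y1 + y1 * U) = 0 -> (x2 * V + V * x2) + (U * y2 + y2 * U) = 0 ->
  ((x1 + x2) * V + V * (x1 + x2)) + (U * (y1 + y2) + (y1 + y2) * U) = 0.
Proof.
move=> h1 h2; rewrite !mulrDl !mulrDr.
have e : forall s t : R, s = 0 -> t = 0 -> s + t = 0 by move=> s t -> ->; rewrite addr0.
rewrite -(e _ _ h1 h2); zcanc.
Qed.
Lemma circ_C (R : pzRingType) (C U V : R) : (forall X, C * X = X * C) -> U * V = 0 -> V * U = 0 ->
  ((C * U) * V + V * (C * U)) + (U * (C * V) + (C * V) * U) = 0.
Proof.
move=> hC hUV hVU.
rewrite -!mulrA hUV hVU mulr0 (hC U) (hC V) !mulrA hUV hVU !mul0r; by rewrite !addr0.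
Qed.
Lemma circ_T (R : pzRingType) (T U V : R) : U * V = 0 -> V * U = 0 ->
  ((T * U - U * T) * V + V * (T * U - U * T)) + (U * (T * V - V * T) + (T * V - V * T) * U) = 0.
Proof.
move=> hUV hVU.
rewrite !mulrBl !mulrBr !mulrA hUV hVU !mul0r -(mulrA T U V) -(mulrA T V U) hUV hVU !mulr0.
zcanc.
Qed.
Lemma idem_D (R : pzRingType) (D : R -> R) : (forall x y, D (x + y) = D x + D y) -> D 1 = 0 ->
 (forall U V, U * V = 0 -> V * U = 0 -> (D U * V + V * D U) + (U * D V + D V * U) = 0) ->
 forall E, E * E = E -> D E + D E = (E * D E + D E * E) + (E * D E + D E * E).
Proof.
move=> Dadd D1 hD E hE.
have DN : forall x, D (- x) = - D x by apply: addfN.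
have h := hD E (1 - E) (ltac:(by rewrite mulrBr mulr1 hE subrr)) (ltac:(by rewrite mulrBl mul1r hE subrr)).
rewrite Dadd DN D1 add0r !mulrBr !mulrBl !mulr1 !mul1r !mulrN !mulNr in h.
solveb h.
Qed.

Lemma phi_one G (phi : mat G -> mat G) (H : Hs phi) : phi (mone G) = Mat (c1 phi) 0 0 (c2 phi).
Proof.
case: H => hA [hB [_ [hz ad]]].
have [sB1 [sA2 [sA12 [sB12 [sA21 sB21]]]]] := stepA hA hB hz.
have -> : mone G = madd (iA 1) (iB 1) by apply: mat_ext => /=; zs.
rewrite ad; apply: mat_ext => /=.
- by rewrite sB1 addr0.
- by rewrite sA12 sB12 lAM_1 rMB_1 addNr.
- by rewrite sA21 sB21 lBN_1 rNA_1 subrr.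
- by rewrite sA2 add0r.
Qed.

Lemma vphi_hyp G (phi : mat G -> mat G) (H : Hs phi) (U V : mat G) : U * V = 0 -> V * U = 0 ->
  (varphi phi U * V + V * varphi phi U) + (U * varphi phi V + varphi phi V * U) = 0.
Proof.
move=> hUV hVU.
have [cM [cN [cA cB]]] := L_central H.
have hC : forall X : mat G, phi (mone G) * X = X * phi (mone G).
  move=> X; rewrite phi_one //; apply: mat_ext => /=; zs; by rewrite ?cA ?cB ?cM ?cN.
case: H => hA [hB [_ [hz ad]]].
have h0 := hz U V hUV hVU.
change ((((phi U - phi (mone G) * U) + (Tphi phi * U - U * Tphi phi)) * V + V * ((phi U - phi (mone G) * U) + (Tphi phi * U - U * Tphi phi)))
  + (U * ((phi V - phi (mone G) * V) + (Tphi phi * V - V * Tphi phi)) + ((phi V - phi (mone G) * V) + (Tphi phi * V - V * Tphi phi)) * U) = 0).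
apply: circ_D; last exact: circ_T.
apply: circ_B; first exact: h0.
exact: circ_C.
Qed.

Lemma vphi_add G (phi : mat G -> mat G) (H : Hs phi) (X Y : mat G) :
  varphi phi (X + Y) = varphi phi X + varphi phi Y.
Proof.
case: H => hA [hB [_ [hz ad]]].
change ((phi (X + Y) - phi (mone G) * (X + Y)) + (Tphi phi * (X + Y) - (X + Y) * Tphi phi) =
  ((phi X - phi (mone G) * X) + (Tphi phi * X - X * Tphi phi)) + ((phi Y - phi (mone G) * Y) + (Tphi phi * Y - Y * Tphi phi))).
rewrite (ad X Y) !mulrDl !mulrDr; zcanc.
Qed.

Lemma vphi_one G (phi : mat G -> mat G) : varphi phi 1 = 0.
Proof.
change ((phi 1 - phi 1 * 1) + (Tphi phi * 1 - 1 * Tphi phi) = 0).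
by rewrite !mulr1 !mul1r !subrr addr0.
Qed.

Definition Em G (m : gM G) (n : gN G) : mat G := Mat (1 + pMN m n) (- m - lAM (pMN m n) m) n (- pNM n m).

Lemma Em_idem G (m : gM G) (n : gN G) : Em m n * Em m n = Em m n.
Proof.
apply: mat_ext => /=.
- rewrite mulrDl !mulrDr pMN_addl; zs; rewrite pMN_lA; zcanc.
- rewrite lAM_addl !lAM_addr rMB_addl; zs; rewrite M_bimod -assoc_MNM; zcanc.
- rewrite rNA_addr; zs; rewrite assoc_NMN; zcanc.
- rewrite pNM_addr; zs; rewrite -pNM_bal -assoc_NMN pNM_lB; zcanc.
Qed.

Lemma tt_cancel (V : zmodType) (h2 : forall x : V, x + x = 0 -> x = 0) (x y : V) : x + x = y + y -> x = y.
Proof.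
move=> e; apply/eqP; rewrite -subr_eq0; apply/eqP; apply: h2.
by rewrite addrACA e addrACA !subrr addr0.
Qed.

Lemma Kzero G (phi : mat G -> mat G) (H : Hs phi) m n :
  (d1 phi (pMN m n) - pMN (Fm phi m) n - pMN m (Gn phi n)) +
   pMN m n * (d1 phi (pMN m n) - pMN (Fm phi m) n - pMN m (Gn phi n)) = 0.
Proof.
have h := idem_D (vphi_add H) (vphi_one phi) (vphi_hyp H) (Em_idem m n).
rewrite (vphi_form H) in h.
have h11 := congr1 (@e11 G) h. simpl in h11.
have [d1D [d1N [d2D [d2N [FD [FN [qD [qN [SD [SN [GD [GN [d10 d20]]]]]]]]]]]]] := L_add H.
have [F1 [F2 [G1 G2]]] := L_rel H.
have [q1 [q2 [s1 [s2 [_ [_ [_ [_ [qz1 [qz2 [sz1 sz2]]]]]]]]]]] := L_q H.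
case: H => hA [hB _].
move/(tt_cancel hA): h11.
move: d1D d1N d10 FD FN qD qN F1 q1 qz1 sz2.
move: (d1 phi) (Fm phi) (qm phi) (Sn phi) (Gn phi) => D1 F q S Gf d1D d1N d10 FD FN qD qN F1 q1 qz1 sz2.
rewrite d1D d10 add0r !FD !FN !qD !qN F1 q1.
rewrite !mulrDl !mulrDr !pMN_addl !pMN_addr; zs; rewrite ?pMN_addl ?opprD; zs.
rewrite !pMN_lA !pMN_rA !qz1 sz2; zs => e.
rewrite ?mulrBr; solveb e.
Qed.

Lemma add_eq0 (V : zmodType) (x y : V) : x = 0 -> y = 0 -> x + y = 0.
Proof. by move=> -> ->; rewrite addr0. Qed.
Lemma sub_eq0 (V : zmodType) (x y : V) : x = 0 -> y = 0 -> x - y = 0.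
Proof. by move=> -> ->; rewrite subr0. Qed.

Lemma Kfinal G (phi : mat G -> mat G) (H : Hs phi) m n :
  d1 phi (pMN m n) = pMN (Fm phi m) n + pMN m (Gn phi n).
Proof.
have e1 := Kzero H m n. have e2 := Kzero H (- m) n.
have [d1D [d1N [d2D [d2N [FD [FN [qD [qN [SD [SN [GD [GN [d10 d20]]]]]]]]]]]]] := L_add H.
case: H => hA _.
move: e1 e2 d1N FN.
move: (d1 phi) (Fm phi) (Gn phi) => D1 F Gf e1 e2 d1N FN.
rewrite !pMNNl d1N FN !pMNNl in e2.
apply/eqP; rewrite -subr_eq0; apply/eqP; apply: hA.
have e := sub_eq0 e1 e2.
rewrite !mulrDr !mulrN in e.
solveb e.
Qed.

Lemma Lzero G (phi : mat G -> mat G) (H : Hs phi) m n :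
  (d2 phi (pNM n m) - pNM n (Fm phi m) - pNM (Gn phi n) m) +
   pNM n m * (d2 phi (pNM n m) - pNM n (Fm phi m) - pNM (Gn phi n) m) +
   (d2 phi (pNM n m) - pNM n (Fm phi m) - pNM (Gn phi n) m) * pNM n m = 0.
Proof.
have h := idem_D (vphi_add H) (vphi_one phi) (vphi_hyp H) (Em_idem m n).
rewrite (vphi_form H) in h.
have h22 := congr1 (@e22 G) h. simpl in h22.
have [d1D [d1N [d2D [d2N [FD [FN [qD [qN [SD [SN [GD [GN [d10 d20]]]]]]]]]]]]] := L_add H.
have [F1 [F2 [G1 G2]]] := L_rel H.
have [q1 [q2 [s1 [s2 [_ [_ [_ [_ [qz1 [qz2 [sz1 sz2]]]]]]]]]]] := L_q H.
have K := Kfinal H m n.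
case: H => hA [hB _].
move/(tt_cancel hB): h22.
move: d2N FD FN qD qN F1 q1 qz2 sz1 K.
move: (d1 phi) (d2 phi) (Fm phi) (qm phi) (Sn phi) (Gn phi) => D1 D2 F q S Gf d2N FD FN qD qN F1 q1 qz2 sz1 K.
rewrite d2N !FD !FN !qD !qN F1 q1 K.
rewrite !mulrDl !mulrDr !pNM_addl !pNM_addr; zs; rewrite ?pNM_addl ?pNM_addr ?lAM_addl ?opprD; zs.
rewrite ?pNM_addl ?pNM_addr ?opprD; zs.
rewrite !assoc_MNM ?pNM_bal ?assoc_MNM !pNM_rB ?qz2 ?sz1; zs => e.
solveb e.
Qed.

Lemma Lfinal G (phi : mat G -> mat G) (H : Hs phi) m n :
  d2 phi (pNM n m) = pNM n (Fm phi m) + pNM (Gn phi n) m.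
Proof.
have e1 := Lzero H m n. have e2 := Lzero H (- m) n.
have [d1D [d1N [d2D [d2N [FD [FN [qD [qN [SD [SN [GD [GN [d10 d20]]]]]]]]]]]]] := L_add H.
case: H => hA [hB _].
move: e1 e2 d2N FN.
move: (d2 phi) (Fm phi) (Gn phi) => D2 F Gf e1 e2 d2N FN.
rewrite !pNMNr d2N FN !pNMNr in e2.
apply/eqP; rewrite -subr_eq0; apply/eqP; apply: hB.
have e := sub_eq0 e1 e2.
rewrite !mulrDr !mulrDl !mulrN !mulNr in e.
solveb e.
Qed.

Lemma ALL G (phi : mat G -> mat G) (H : Hs phi) :
  let D1 := d1 phi in let D2 := d2 phi in let F := Fm phi in let q := qm phi in
  let S := Sn phi in let Gf := Gn phi in
  (D1 0 = 0 /\ D2 0 = 0 /\ F 0 = 0 /\ q 0 = 0 /\ S 0 = 0 /\ Gf 0 = 0) /\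
  ((forall x y, D1 (x + y) = D1 x + D1 y) /\ (forall x y, D2 (x + y) = D2 x + D2 y)) /\
  ((forall a m, F (lAM a m) = lAM (D1 a) m + lAM a (F m)) /\
   (forall m b, F (rMB m b) = rMB (F m) b + rMB m (D2 b)) /\
   (forall b n, Gf (lBN b n) = lBN (D2 b) n + lBN b (Gf n)) /\
   (forall n a, Gf (rNA n a) = rNA (Gf n) a + rNA n (D1 a))) /\
  ((forall a m, q (lAM a m) = rNA (q m) a) /\
   (forall m b, q (rMB m b) = lBN b (q m)) /\
   (forall n a, S (rNA n a) = lAM a (S n)) /\
   (forall b n, S (lBN b n) = rMB (S n) b)) /\
  ((forall a a', D1 (a * a') = D1 a * a' + a * D1 a') /\
   (forall b b', D2 (b * b') = D2 b * b' + b * D2 b')) /\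
  ((forall m n, D1 (pMN m n) = pMN (F m) n + pMN m (Gf n)) /\
   (forall m n, D2 (pNM n m) = pNM n (F m) + pNM (Gf n) m)).
Proof.
move=> D1 D2 F q S Gf.
have [d1D [d1N [d2D [d2N [FD [FN [qD [qN [SD [SN [GD [GN [d10 d20]]]]]]]]]]]]] := L_add H.
have [F1 [F2 [G1 G2]]] := L_rel H.
have [q1 [q2 [s1 [s2 _]]]] := L_q H.
have [der1 der2] := L_der H.
split; first by do !split; apply: addf0.
split; first by split.
split; first by do !split.
split; first by do !split.
split; first by split.
split; [exact: Kfinal | exact: Lfinal].
Qed.

Lemma case_AM G (phi : mat G -> mat G) (H : Hs phi) (a : gA G) (m : gM G) : jder_at phi (iA a) (iM m).
Proof.
have [[z1 [z2 [z3 [z4 [z5 z6]]]]] [[D1D D2D] [[F1 [F2 [G1 G2]]] [[q1 [q2 [s1 s2]]] [[der1 der2] [K L]]]]]] := ALL H.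
rewrite /jder_at !(vphi_form H).
move: z1 z2 z3 z4 z5 z6 D1D D2D F1 F2 G1 G2 q1 q2 s1 s2 der1 der2 K L.
move: (d1 phi) (d2 phi) (Fm phi) (qm phi) (Sn phi) (Gn phi) => D1 D2 F q S Gf.
move=> z1 z2 z3 z4 z5 z6 D1D D2D F1 F2 G1 G2 q1 q2 s1 s2 der1 der2 K L.
apply: mat_ext => /=; zs; rewrite ?z1 ?z2 ?z3 ?z4 ?z5 ?z6; zs;
  rewrite ?F1 ?F2 ?G1 ?G2 ?q1 ?q2 ?s1 ?s2 ?D1D ?D2D ?der1 ?der2 ?K ?L; zs; zcanc.
Qed.
Lemma case_BN G (phi : mat G -> mat G) (H : Hs phi) (b : gB G) (n : gN G) : jder_at phi (iB b) (iN n).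
Proof.
have [[z1 [z2 [z3 [z4 [z5 z6]]]]] [[D1D D2D] [[F1 [F2 [G1 G2]]] [[q1 [q2 [s1 s2]]] [[der1 der2] [K L]]]]]] := ALL H.
rewrite /jder_at !(vphi_form H).
move: z1 z2 z3 z4 z5 z6 D1D D2D F1 F2 G1 G2 q1 q2 s1 s2 der1 der2 K L.
move: (d1 phi) (d2 phi) (Fm phi) (qm phi) (Sn phi) (Gn phi) => D1 D2 F q S Gf.
move=> z1 z2 z3 z4 z5 z6 D1D D2D F1 F2 G1 G2 q1 q2 s1 s2 der1 der2 K L.
apply: mat_ext => /=; zs; rewrite ?z1 ?z2 ?z3 ?z4 ?z5 ?z6; zs;
  rewrite ?F1 ?F2 ?G1 ?G2 ?q1 ?q2 ?s1 ?s2 ?D1D ?D2D ?der1 ?der2 ?K ?L; zs; zcanc.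
Qed.
Lemma case_AN G (phi : mat G -> mat G) (H : Hs phi) (a : gA G) (n : gN G) : jder_at phi (iA a) (iN n).
Proof.
have [[z1 [z2 [z3 [z4 [z5 z6]]]]] [[D1D D2D] [[F1 [F2 [G1 G2]]] [[q1 [q2 [s1 s2]]] [[der1 der2] [K L]]]]]] := ALL H.
rewrite /jder_at !(vphi_form H).
move: z1 z2 z3 z4 z5 z6 D1D D2D F1 F2 G1 G2 q1 q2 s1 s2 der1 der2 K L.
move: (d1 phi) (d2 phi) (Fm phi) (qm phi) (Sn phi) (Gn phi) => D1 D2 F q S Gf.
move=> z1 z2 z3 z4 z5 z6 D1D D2D F1 F2 G1 G2 q1 q2 s1 s2 der1 der2 K L.
apply: mat_ext => /=; zs; rewrite ?z1 ?z2 ?z3 ?z4 ?z5 ?z6; zs;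
  rewrite ?F1 ?F2 ?G1 ?G2 ?q1 ?q2 ?s1 ?s2 ?D1D ?D2D ?der1 ?der2 ?K ?L; zs; zcanc.
Qed.
Lemma case_BM G (phi : mat G -> mat G) (H : Hs phi) (b : gB G) (m : gM G) : jder_at phi (iB b) (iM m).
Proof.
have [[z1 [z2 [z3 [z4 [z5 z6]]]]] [[D1D D2D] [[F1 [F2 [G1 G2]]] [[q1 [q2 [s1 s2]]] [[der1 der2] [K L]]]]]] := ALL H.
rewrite /jder_at !(vphi_form H).
move: z1 z2 z3 z4 z5 z6 D1D D2D F1 F2 G1 G2 q1 q2 s1 s2 der1 der2 K L.
move: (d1 phi) (d2 phi) (Fm phi) (qm phi) (Sn phi) (Gn phi) => D1 D2 F q S Gf.
move=> z1 z2 z3 z4 z5 z6 D1D D2D F1 F2 G1 G2 q1 q2 s1 s2 der1 der2 K L.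
apply: mat_ext => /=; zs; rewrite ?z1 ?z2 ?z3 ?z4 ?z5 ?z6; zs;
  rewrite ?F1 ?F2 ?G1 ?G2 ?q1 ?q2 ?s1 ?s2 ?D1D ?D2D ?der1 ?der2 ?K ?L; zs; zcanc.
Qed.
Lemma case_AA G (phi : mat G -> mat G) (H : Hs phi) (a a' : gA G) : jder_at phi (iA a) (iA a').
Proof.
have [[z1 [z2 [z3 [z4 [z5 z6]]]]] [[D1D D2D] [[F1 [F2 [G1 G2]]] [[q1 [q2 [s1 s2]]] [[der1 der2] [K L]]]]]] := ALL H.
rewrite /jder_at !(vphi_form H).
move: z1 z2 z3 z4 z5 z6 D1D D2D F1 F2 G1 G2 q1 q2 s1 s2 der1 der2 K L.
move: (d1 phi) (d2 phi) (Fm phi) (qm phi) (Sn phi) (Gn phi) => D1 D2 F q S Gf.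
move=> z1 z2 z3 z4 z5 z6 D1D D2D F1 F2 G1 G2 q1 q2 s1 s2 der1 der2 K L.
apply: mat_ext => /=; zs; rewrite ?z1 ?z2 ?z3 ?z4 ?z5 ?z6; zs;
  rewrite ?F1 ?F2 ?G1 ?G2 ?q1 ?q2 ?s1 ?s2 ?D1D ?D2D ?der1 ?der2 ?K ?L; zs; zcanc.
Qed.
Lemma case_BB G (phi : mat G -> mat G) (H : Hs phi) (b b' : gB G) : jder_at phi (iB b) (iB b').
Proof.
have [[z1 [z2 [z3 [z4 [z5 z6]]]]] [[D1D D2D] [[F1 [F2 [G1 G2]]] [[q1 [q2 [s1 s2]]] [[der1 der2] [K L]]]]]] := ALL H.
rewrite /jder_at !(vphi_form H).
move: z1 z2 z3 z4 z5 z6 D1D D2D F1 F2 G1 G2 q1 q2 s1 s2 der1 der2 K L.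
move: (d1 phi) (d2 phi) (Fm phi) (qm phi) (Sn phi) (Gn phi) => D1 D2 F q S Gf.
move=> z1 z2 z3 z4 z5 z6 D1D D2D F1 F2 G1 G2 q1 q2 s1 s2 der1 der2 K L.
apply: mat_ext => /=; zs; rewrite ?z1 ?z2 ?z3 ?z4 ?z5 ?z6; zs;
  rewrite ?F1 ?F2 ?G1 ?G2 ?q1 ?q2 ?s1 ?s2 ?D1D ?D2D ?der1 ?der2 ?K ?L; zs; zcanc.
Qed.
Lemma case_MN G (phi : mat G -> mat G) (H : Hs phi) (m : gM G) (n : gN G) : jder_at phi (iM m) (iN n).
Proof.
have [[z1 [z2 [z3 [z4 [z5 z6]]]]] [[D1D D2D] [[F1 [F2 [G1 G2]]] [[q1 [q2 [s1 s2]]] [[der1 der2] [K L]]]]]] := ALL H.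
rewrite /jder_at !(vphi_form H).
move: z1 z2 z3 z4 z5 z6 D1D D2D F1 F2 G1 G2 q1 q2 s1 s2 der1 der2 K L.
move: (d1 phi) (d2 phi) (Fm phi) (qm phi) (Sn phi) (Gn phi) => D1 D2 F q S Gf.
move=> z1 z2 z3 z4 z5 z6 D1D D2D F1 F2 G1 G2 q1 q2 s1 s2 der1 der2 K L.
apply: mat_ext => /=; zs; rewrite ?z1 ?z2 ?z3 ?z4 ?z5 ?z6; zs;
  rewrite ?F1 ?F2 ?G1 ?G2 ?q1 ?q2 ?s1 ?s2 ?D1D ?D2D ?der1 ?der2 ?K ?L; zs; zcanc.
Qed.
Lemma case_NM G (phi : mat G -> mat G) (H : Hs phi) (n : gN G) (m : gM G) : jder_at phi (iN n) (iM m).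
Proof.
have [[z1 [z2 [z3 [z4 [z5 z6]]]]] [[D1D D2D] [[F1 [F2 [G1 G2]]] [[q1 [q2 [s1 s2]]] [[der1 der2] [K L]]]]]] := ALL H.
rewrite /jder_at !(vphi_form H).
move: z1 z2 z3 z4 z5 z6 D1D D2D F1 F2 G1 G2 q1 q2 s1 s2 der1 der2 K L.
move: (d1 phi) (d2 phi) (Fm phi) (qm phi) (Sn phi) (Gn phi) => D1 D2 F q S Gf.
move=> z1 z2 z3 z4 z5 z6 D1D D2D F1 F2 G1 G2 q1 q2 s1 s2 der1 der2 K L.
apply: mat_ext => /=; zs; rewrite ?z1 ?z2 ?z3 ?z4 ?z5 ?z6; zs;
  rewrite ?F1 ?F2 ?G1 ?G2 ?q1 ?q2 ?s1 ?s2 ?D1D ?D2D ?der1 ?der2 ?K ?L; zs; zcanc.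
Qed.

Lemma corner11 G (X : mat G) : corner (P1 G) (P1 G) X = iA (e11 X).
Proof. by apply: mat_ext => /=; zs. Qed.
Lemma corner12 G (X : mat G) : corner (P1 G) (P2 G) X = iM (e12 X).
Proof. by apply: mat_ext => /=; zs. Qed.
Lemma corner21 G (X : mat G) : corner (P2 G) (P1 G) X = iN (e21 X).
Proof. by apply: mat_ext => /=; zs. Qed.
Lemma corner22 G (X : mat G) : corner (P2 G) (P2 G) X = iB (e22 X).
Proof. by apply: mat_ext => /=; zs. Qed.

Theorem lemma2p6 (G : GMR)
  (hA : two_torsion_free (gA G)) (hB : two_torsion_free (gB G))
  (hM : M_faithful G)
  (phi : mat G -> mat G) (hphi : lemma22_hyp phi) :
  let P1 := P1 G in let P2 := P2 G in
  (forall X Y, jder_at phi (corner P1 P1 X) (corner P1 P2 Y)) /\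
  (forall X Y, jder_at phi (corner P2 P2 X) (corner P2 P1 Y)) /\
  (forall X Y, jder_at phi (corner P1 P1 X) (corner P2 P1 Y)) /\
  (forall X Y, jder_at phi (corner P2 P2 X) (corner P1 P2 Y)) /\
  (forall X Y, jder_at phi (corner P1 P1 X) (corner P1 P1 Y)) /\
  (forall X Y, jder_at phi (corner P2 P2 X) (corner P2 P2 Y)) /\
  (forall X Y, jder_at phi (corner P1 P2 X) (corner P2 P1 Y)) /\
  (forall X Y, jder_at phi (corner P2 P1 X) (corner P1 P2 Y)).
Proof.
have H : Hs phi := conj hA (conj hB (conj hM (conj hphi.2 hphi.1))).
move=> P1' P2'; rewrite /P1' /P2'.
repeat split; move=> X Y; rewrite ?corner11 ?corner12 ?corner21 ?corner22.
- exact: case_AM.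
- exact: case_BN.
- exact: case_AN.
- exact: case_BM.
- exact: case_AA.
- exact: case_BB.
- exact: case_MN.
- exact: case_NM.
Qed.
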